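(* Let $G$ be a graph, let $X$ be a partition parameter defined by property $x$, and let $\mathcal Y=\{Y_i\}_{i=1}^m$ be a partition of $V(G)$ having property $x$ such that $|\mathcal Y|=X(G)$. Then the following are equivalent: (1) $\mathcal{R}^{\mathrm{TE}}_X(G)\cong K_{|Y_1|}\,\square\,\cdots\,\square\,K_{|Y_m|}$; (2) $\mathcal{R}^{\mathrm{TS}}_X(G)\cong G[Y_1]\,\square\,\cdots\,\square\,G[Y_m]$; (3) $\mathcal Y$ is the unique partition of $V(G)$ having property $x$ with $|\mathcal Y|=X(G)$.
   Context: All graphs are finite and simple; $\square$ is the Cartesian product and $G[Y]$ the induced subgraph. A graph parameter $X$ is a partition parameter defined by property $x$ if for every graph $G$, $X(G)$ equals either (for every graph) the maximum, or (for every graph) the minimum, of $|\mathcal Y|$ over partitions $\mathcal Y$ of $V(G)$ having property $x$ in $G$. A set $B\subseteq V(G)$ is a transversal of a partition $\mathcal Y$ if $|Y\cap B|=1$ for every $Y\in\mathcal Y$. For a partition parameter $X$, the reconfiguration graphs are those of the associated transversal vertex parameter: $\mathcal{R}^{\mathrm{TE}}_X(G)$ has as vertices all transversals $B$ of partitions of $V(G)$ having property $x$ with $|B|=X(G)$, and $B_1B_2$ is an edge iff there exist $v_1\in B_1\setminus B_2$, $v_2\in B_2\setminus B_1$ with $B_1\setminus\{v_1\}=B_2\setminus\{v_2\}$; $\mathcal{R}^{\mathrm{TS}}_X(G)$ has the same vertex set, with the additional adjacency requirement $v_1v_2\in E(G)$. *)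

(* Defs.v *)
From HB Require Import structures.
From mathcomp Require Import all_boot.

Set Implicit Arguments.
Unset Strict Implicit.
Unset Printing Implicit Defensive.

Record fgraph := FGraph { gV : finType; gE : rel gV }.

Definition graph_iso (G H : fgraph) : Prop :=
  exists f : gV G -> gV H, bijective f /\ forall u v, @gE G u v = @gE H (f u) (f v).

Definition Kgraph (n : nat) : fgraph := @FGraph 'I_n (fun i j => i != j).

Definition unit_graph : fgraph := @FGraph unit (fun _ _ => false).

Definition cart_prod (G H : fgraph) : fgraph :=
  @FGraph (gV G * gV H)%type
    (fun u v => (@gE G u.1 v.1 && (u.2 == v.2)) || ((u.1 == v.1) && @gE H u.2 v.2)).

Definition cart_prod_seq (gs : seq fgraph) : fgraph := foldr cart_prod unit_graph gs.

Definition induced (T : finType) (e : rel T) (Y : {set T}) : fgraph :=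
  @FGraph {x : T | x \in Y} (fun u v => e (val u) (val v)).

Definition is_vpartition (T : finType) (Y : {set {set T}}) : bool :=
  partition Y [set: T].

Definition transversal_of (T : finType) (Y : {set {set T}}) (B : {set T}) : bool :=
  [forall A in Y, #|A :&: B| == 1].

(* k = X(G), where X is the partition parameter defined by the property x
   (x Y means "the partition Y of V(G) has property x in G"),
   and X(G) is either the maximum (ismax = true) or the minimum (ismax = false)
   of |Y| over partitions Y of V(G) having property x. *)
Definition param_value (T : finType) (x : {set {set T}} -> bool) (ismax : bool)
    (k : nat) : Prop :=
  (exists Y, [/\ is_vpartition Y, x Y & #|Y| = k]) /\
  (forall Y, is_vpartition Y -> x Y -> if ismax then #|Y| <= k else k <= #|Y|).

Definition rvert (T : finType) (x : {set {set T}} -> bool) (k : nat) (B : {set T}) : bool :=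
  [exists Y : {set {set T}}, [&& is_vpartition Y, x Y & transversal_of Y B]] && (#|B| == k).

Definition te_adj (T : finType) (B1 B2 : {set T}) : bool :=
  [exists v1 in B1 :\: B2, exists v2 in B2 :\: B1, B1 :\ v1 == B2 :\ v2].

Definition ts_adj (T : finType) (e : rel T) (B1 B2 : {set T}) : bool :=
  [exists v1 in B1 :\: B2, exists v2 in B2 :\: B1, (B1 :\ v1 == B2 :\ v2) && e v1 v2].

Definition RTE (T : finType) (x : {set {set T}} -> bool) (k : nat) : fgraph :=
  @FGraph {B : {set T} | rvert x k B} (fun B1 B2 => te_adj (val B1) (val B2)).

Definition RTS (T : finType) (e : rel T) (x : {set {set T}} -> bool) (k : nat) : fgraph :=
  @FGraph {B : {set T} | rvert x k B} (fun B1 B2 => ts_adj e (val B1) (val B2)).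

(* Main.v *)
Require Import Defs.
From HB Require Import structures.
From mathcomp Require Import all_boot.

Module M1.
Set Implicit Arguments. Unset Strict Implicit. Unset Printing Implicit Defensive.

Definition adjR (T : finType) (R : rel T) (B1 B2 : {set T}) : bool :=
  [exists v1 in B1 :\: B2, exists v2 in B2 :\: B1, (B1 :\ v1 == B2 :\ v2) && R v1 v2].

Lemma adj_step (T : finType) (R : rel T) (Y D1 D2 : {set T}) (u w : T) :
  u \in Y -> w \in Y -> (forall z, z \in D1 -> z \notin Y) -> (forall z, z \in D2 -> z \notin Y) ->
  adjR R (u |: D1) (w |: D2) = ((u != w) && R u w && (D1 == D2)) || ((u == w) && adjR R D1 D2).
Proof.
move=> uY wY hD1 hD2.
have uD1 : u \notin D1 by apply/negP => /hD1; rewrite uY.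
have uD2 : u \notin D2 by apply/negP => /hD2; rewrite uY.
have wD1 : w \notin D1 by apply/negP => /hD1; rewrite wY.
have wD2 : w \notin D2 by apply/negP => /hD2; rewrite wY.
apply/idP/idP.
- case/existsP => v1 /andP[/setDP [v1B1 v1nB2]] /existsP [v2 /andP[/setDP[v2B2 v2nB1]] /andP[/eqP E HR]].
  case: (v1 =P u) => [ev1 | v1u].
  + subst v1.
    have uw : u != w by apply/eqP => euw; move: v1nB2; rewrite euw setU11.
    rewrite uw /=; apply/orP; left.
    case: (v2 =P w) => [ev2 | v2w].
    * subst v2; rewrite HR /=; apply/eqP.
      by rewrite -(setU1K uD1) -(setU1K wD2).
    * exfalso; move/setP: E => /(_ w); rewrite !inE eqxx (negPf wD1) orbF andbT.
      have -> : w != v2 by apply/eqP => h; apply: v2w; rewrite h.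
      by case: eqP.
  + have uB2 : u \in w |: D2.
      move/setP: E => /(_ u); rewrite !inE eqxx /=.
      have -> : (u != v1) by apply/eqP => h; apply: v1u; rewrite h.
      by rewrite /= => /esym /andP [].
    have euw : u = w by move: uB2; rewrite !inE (negPf uD2) orbF; move/eqP.
    subst w; rewrite eqxx /=; 
    have v1D1 : v1 \in D1 by case/setU1P: v1B1 => // /v1u.
    have v2u : v2 != u by apply/eqP => h; move: v2nB1; rewrite h setU11.
    have v2D2 : v2 \in D2 by move: v2B2; rewrite !inE (negPf v2u).
    apply/existsP; exists v1; rewrite !inE v1D1 andbT.
    apply/andP; split; first by apply/negP => h; move: v1nB2; rewrite inE h orbT.
    apply/existsP; exists v2; rewrite !inE v2D2 andbT.
    apply/andP; split; first by apply/negP => h; move: v2nB1; rewrite inE h orbT.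
    rewrite HR andbT; apply/eqP/setP => z; move/setP: E => /(_ z); rewrite !inE.
    case: (z =P u) => [-> | zu] /=.
      by rewrite (negPf uD1) (negPf uD2) !andbF.
    by [].
- case/orP => [/andP [/andP [uw HR] /eqP eD] | /andP [/eqP euw /existsP [v1 /andP [/setDP [v1D1 v1nD2] /existsP [v2 /andP [/setDP [v2D2 v2nD1] /andP [/eqP E HR]]]]]]].
  + subst D2; apply/existsP; exists u; rewrite !inE eqxx /= (negPf uD1) (negPf uw) /=.
    apply/existsP; exists w; rewrite !inE eqxx /= (negPf wD1) eq_sym (negPf uw) /= HR andbT.
    by rewrite setU1K // setU1K.
  + subst w.
    have v1u : v1 != u by apply/eqP => h; move: v1D1; rewrite h (negPf uD1).
    have v2u : v2 != u by apply/eqP => h; move: v2D2; rewrite h (negPf uD2).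
    apply/existsP; exists v1; rewrite !inE v1D1 orbT (negPf v1nD2) orbF v1u /=.
    apply/existsP; exists v2; rewrite !inE v2D2 orbT (negPf v2nD1) orbF v2u /= HR andbT.
    apply/eqP/setP => z; move/setP: E => /(_ z); rewrite !inE.
    case: (z =P u) => [-> | zu] /=; last by [].
    by rewrite eq_sym v1u eq_sym v2u.
Qed.

End M1.
Import M1.

Module M3.
Set Implicit Arguments. Unset Strict Implicit. Unset Printing Implicit Defensive.

Section Part.
Variable T : finType.

Lemma cov_all (Y : {set {set T}}) x : is_vpartition Y -> x \in cover Y.
Proof. by case/and3P => /eqP -> _ _; rewrite inE. Qed.

Lemma triv_of (Y : {set {set T}}) : is_vpartition Y -> trivIset Y.
Proof. by case/and3P. Qed.

Lemma nz_of (Y : {set {set T}}) A : is_vpartition Y -> A \in Y -> exists a, a \in A.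
Proof.
case/and3P => _ _ n0 AY; apply/set0Pn; apply/negP => /eqP eA.
by move: n0; rewrite -eA AY.
Qed.

Lemma card_trans (Y : {set {set T}}) B : is_vpartition Y -> transversal_of Y B -> #|B| = #|Y|.
Proof.
move=> hY /forallP hB.
have inj : {in B &, injective (pblock Y)}.
  move=> b1 b2 b1B b2B eb.
  have AY := pblock_mem (cov_all b1 hY).
  move: (hB (pblock Y b1)); rewrite AY /= => /cards1P [c hc].
  have h1 : b1 \in pblock Y b1 :&: B by rewrite inE mem_pblock cov_all.
  have h2 : b2 \in pblock Y b1 :&: B by rewrite inE eb mem_pblock cov_all.
  by move: h1 h2; rewrite hc !inE => /eqP -> /eqP ->.
rewrite -(card_in_imset inj); apply: eq_card => A; apply/imsetP/idP.
  by case=> b _ ->; apply: pblock_mem; apply: cov_all.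
move=> AY; move: (hB A); rewrite AY /= => /cards1P [c hc].
have : c \in A :&: B by rewrite hc set11.
rewrite inE => /andP [cA cB]; exists c => //.
by rewrite (def_pblock (triv_of hY) AY cA).
Qed.

Lemma exist_trans (Y : {set {set T}}) u v : is_vpartition Y -> pblock Y u != pblock Y v ->
  exists B, [&& transversal_of Y B, u \in B & v \in B].
Proof.
move=> hY nuv.
pose g (A : {set T}) := if u \in A then u else if v \in A then v else odflt u [pick z in A].
have gA : forall A, A \in Y -> g A \in A.
  move=> A AY; rewrite /g; case: ifP => // _; case: ifP => // _.
  case: pickP => //= h; case: (nz_of hY AY) => a aA.
  by move: (h a); rewrite aA.
have hT := triv_of hY.
exists (g @: Y); apply/and3P; split.
- apply/forallP => A; apply/implyP => AY; apply/cards1P; exists (g A).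
  apply/setP => z; rewrite !inE; apply/andP/eqP.
    case => zA /imsetP [A' A'Y ez]; subst z.
    have e : A' = A.
      by apply: (etrans (esym (def_pblock hT A'Y (gA _ A'Y)))); apply: def_pblock.
    by rewrite e.
  by move=> ->; split; [exact: gA | apply: imset_f].
- have Y1 := pblock_mem (cov_all u hY).
  apply/imsetP; exists (pblock Y u) => //.
  by rewrite /g mem_pblock cov_all.
- have Y1 := pblock_mem (cov_all v hY).
  apply/imsetP; exists (pblock Y v) => //.
  rewrite /g mem_pblock (cov_all _ hY).
  case: ifP => // uv; move: nuv.
  by rewrite (def_pblock hT Y1 uv) eqxx.
Qed.

Lemma uniq_from_trans (Y Y0 : {set {set T}}) :
  is_vpartition Y -> is_vpartition Y0 -> #|Y| = #|Y0| ->
  (forall B, transversal_of Y B -> transversal_of Y0 B) -> Y = Y0.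
Proof.
move=> hY hY0 ecard htr.
have hT := triv_of hY; have hT0 := triv_of hY0.
have refine : forall a b, pblock Y0 a = pblock Y0 b -> pblock Y a = pblock Y b.
  move=> a b e0; apply/eqP; apply/negPn/negP => nab.
  case: (exist_trans hY nab) => B /and3P [tB aB bB].
  move/forallP: (htr B tB) => /(_ (pblock Y0 a)).
  rewrite pblock_mem ?cov_all //= => /cards1P [c hc].
  have h1 : a \in pblock Y0 a :&: B by rewrite inE aB mem_pblock cov_all.
  have h2 : b \in pblock Y0 a :&: B by rewrite inE bB e0 mem_pblock cov_all.
  move: h1 h2; rewrite hc !inE => /eqP ea /eqP eb.
  by move: nab; rewrite ea eb eqxx.
have pbA : forall A a, A \in Y -> a \in A -> pblock Y a = A.
  by move=> A a AY aA; apply: def_pblock.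
have sub : Y \subset Y0.
  apply/subsetP => A AY; case: (nz_of hY AY) => a aA.
  pose phi (A0 : {set T}) := pblock Y (odflt a [pick z in A0]).
  have phiP : forall A0 z, A0 \in Y0 -> z \in A0 -> phi A0 = pblock Y z.
    move=> A0 z A0Y zA0; rewrite /phi; case: pickP => [w wA0 | h]; last by move: (h z); rewrite zA0.
    apply: refine; by rewrite (def_pblock hT0 A0Y wA0) (def_pblock hT0 A0Y zA0).
  have im : phi @: Y0 = Y.
    apply/setP => A'; apply/imsetP/idP.
      case=> A0 A0Y ->; case: (nz_of hY0 A0Y) => w wA0.
      by rewrite (phiP _ _ A0Y wA0) pblock_mem ?cov_all.
    move=> A'Y; case: (nz_of hY A'Y) => a' a'A'.
    exists (pblock Y0 a'); first by rewrite pblock_mem ?cov_all.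
    by rewrite (phiP _ a') ?pblock_mem ?mem_pblock ?cov_all // (pbA _ _ A'Y a'A').
  have injphi : {in Y0 &, injective phi}.
    by apply/imset_injP; rewrite im ecard.
  have -> : A = pblock Y0 a.
    apply/setP => z; apply/idP/idP => zA.
      have e : pblock Y0 z = pblock Y0 a.
        apply: injphi; rewrite ?pblock_mem ?cov_all //.
        rewrite (phiP _ z) ?pblock_mem ?mem_pblock ?cov_all //.
        rewrite (phiP _ a) ?pblock_mem ?mem_pblock ?cov_all //.
        by rewrite (pbA _ _ AY zA) (pbA _ _ AY aA).
      by rewrite -e mem_pblock cov_all.
    have e : pblock Y z = pblock Y a.
      by apply: refine; rewrite (def_pblock hT0 _ zA) ?pblock_mem ?cov_all.
    by rewrite -(pbA _ _ AY aA) -e mem_pblock cov_all.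
  by rewrite pblock_mem ?cov_all.
by apply/eqP; rewrite eqEcard sub ecard leqnn.
Qed.
End Part.

End M3.
Import M3.

Module M4.
Unset Printing Implicit Defensive.

Section Dec.
Variables (T : finType) (m : nat).
Local Notation I := ('I_m).
Variables (Ys : I -> {set T}) (F : I -> Defs.fgraph)
  (f : forall i, gV (F i) -> T) (R : rel T).
Hypothesis f_inj : forall i, injective (f i).
Hypothesis f_in : forall i a, f i a \in Ys i.
Hypothesis f_surj : forall i y, y \in Ys i -> exists a, f i a = y.
Hypothesis disj : forall i j y, y \in Ys i -> y \in Ys j -> i = j.
Hypothesis hE : forall i a b, @gE (F i) a b = (f i a != f i b) && R (f i a) (f i b).

Fixpoint dec (s : seq I) : gV (cart_prod_seq (map F s)) -> {set T} :=
  match s return gV (cart_prod_seq (map F s)) -> {set T} with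
  | [::] => fun _ => set0
  | i :: s' => fun p => f i p.1 |: dec s' p.2
  end.

Definition U (s : seq I) : {set T} := [set y | has (fun i => y \in Ys i) s].
Definition Ptrans (s : seq I) (B : {set T}) : bool :=
  (B \subset U s) && all (fun i => #|Ys i :&: B| == 1) s.

Lemma notU i s y : i \notin s -> y \in Ys i -> y \notin U s.
Proof.
move=> ins yi; rewrite inE; apply/hasPn => j js; apply/negP => yj.
by move: ins; rewrite (disj _ _ _ yi yj) js.
Qed.

Lemma dec_sub s p : dec s p \subset U s.
Proof.
elim: s p => [|i s IH] p /=; first by rewrite sub0set.
apply/subsetP => y; rewrite !inE => /orP [/eqP -> | /(subsetP (IH _))].
  by rewrite /= f_in.
by rewrite inE /= => ->; rewrite orbT.
Qed.

Lemma decP s p : uniq s -> Ptrans s (dec s p).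
Proof.
rewrite /Ptrans dec_sub /=.
elim: s p => [|i s IH] p //= /andP [ins us].
have hi : Ys i :&: (f i p.1 |: dec s p.2) = [set f i p.1].
  apply/setP => y; rewrite !inE; case: (y =P f i p.1) => [->|_] /=.
    by rewrite f_in.
  apply/negP => /andP [yi yd].
  by move: (notU _ _ _ ins yi); rewrite (subsetP (dec_sub _ _) _ yd).
rewrite hi cards1 eqxx /=.
apply/allP => j js; move/allP: (IH p.2 us) => /(_ j js) /eqP <-.
apply/eqP/eq_card => y; rewrite !inE.
case: (y =P f i p.1) => [-> | _] //=.
have -> : (f i p.1 \in Ys j) = false.
  apply/negP => h; move: (disj _ _ _ (f_in i p.1) h) => eij.
  by move: ins; rewrite eij js.
done.
Qed.

Lemma dec_inj s : uniq s -> injective (dec s).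
Proof.
elim: s => [|i s IH] //=.
  by move=> _ [] [].
case/andP => ins us [a p] [b q] /= E.
have hd : forall r, (f i r.1 |: dec s r.2) :&: Ys i = [set f i r.1].
  move=> r; apply/setP => y; rewrite !inE; case: (y =P f i r.1) => [->|_] /=.
    by rewrite f_in.
  apply/negP => /andP [yd yi].
  by move: (notU _ _ _ ins yi); rewrite (subsetP (dec_sub _ _) _ yd).
have hr : forall r, (f i r.1 |: dec s r.2) :\: Ys i = dec s r.2.
  move=> r; apply/setP => y; rewrite !inE; case: (y =P f i r.1) => [->|_] /=.
    rewrite f_in /=; apply/esym/negP => yd.
    by move: (notU _ _ _ ins (f_in i r.1)); rewrite (subsetP (dec_sub _ _) _ yd).
  case yd: (y \in dec s r.2); rewrite ?andbF // andbT.
  apply/negP => yi.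
  by move: (notU _ _ _ ins yi); rewrite (subsetP (dec_sub _ _) _ yd).
have e1 := hd (a, p); have e2 := hd (b, q); rewrite /= E e2 in e1.
have e3 := hr (a, p); have e4 := hr (b, q); rewrite /= E e4 in e3.
move/setP: e1 => /(_ (f i b)); rewrite !inE eqxx eq_sym => /esym /eqP /f_inj ->.
by rewrite /= in e3; rewrite (IH us _ _ e3).
Qed.

Lemma dec_surj s B : uniq s -> Ptrans s B -> exists p, dec s p = B.
Proof.
elim: s B => [|i s IH] B /=.
  move=> _ /andP [sB _]; exists tt; apply/esym/setP => y.
  by rewrite inE; apply/negP => /(subsetP sB); rewrite inE.
case/andP => ins us /andP [sB /andP [/cards1P [y hy] hall]].
have yB : y \in Ys i :&: B by rewrite hy set11.
move: (yB); rewrite inE => /andP [yi yB'].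
case: (f_surj _ _ yi) => a fa.
have [p hp] : exists p, dec s p = B :\ y.
  apply: IH => //; apply/andP; split.
    apply/subsetP => z; rewrite !inE => /andP [zy zB].
    move: (subsetP sB z zB); rewrite inE /= => /orP [zi|//].
    have : z \in Ys i :&: B by rewrite inE zi.
    by rewrite hy inE (negPf zy).
  apply/allP => j js; move/allP: hall => /(_ j js) /eqP <-.
  apply/eqP/eq_card => z; rewrite !inE.
  case: (z =P y) => [-> | _] //=.
  have -> : (y \in Ys j) = false.
    apply/negP => h; move: (disj _ _ _ yi h) => eij.
    by move: ins; rewrite eij js.
  done.
exists (a, p) => /=; rewrite hp fa.
by rewrite setD1K.
Qed.

Lemma dec_adj s : uniq s -> forall p q,
  @gE (cart_prod_seq (map F s)) p q = adjR R (dec s p) (dec s q).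
Proof.
elim: s => [|i s IH] /=.
  move=> _ [] []; apply/esym/existsP => [[v]]; by rewrite !inE.
case/andP => ins us [a p] [b q] /=.
have hD : forall r z, z \in dec s r -> z \notin Ys i.
  move=> r z zd; apply/negP => zi.
  by move: (notU _ _ _ ins zi); rewrite (subsetP (dec_sub _ _) _ zd).
rewrite (adj_step R (f_in i a) (f_in i b) (hD p) (hD q)) hE IH //.
rewrite (inj_eq (f_inj i)) (inj_eq (dec_inj _ us)).
done.
Qed.


Variables (x : {set {set T}} -> bool) (k : nat).
Let Y0 := [set Ys i | i : I].
Hypothesis HYpart : is_vpartition Y0.
Hypothesis HYx : x Y0.
Hypothesis HYk : #|Y0| = k.

Let s0 := enum I.
Let us0 : uniq s0. Proof. exact: enum_uniq. Qed.

Lemma U_all y : y \in U s0.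
Proof.
rewrite inE; have := cov_all y HYpart; rewrite /cover => /bigcupP [A /imsetP [i _ ->] yi].
by apply/hasP; exists i; rewrite ?mem_enum.
Qed.

Lemma trans_iff B : transversal_of Y0 B = Ptrans s0 B.
Proof.
rewrite /Ptrans; have -> : B \subset U s0 by apply/subsetP => y _; apply: U_all.
apply/forallP/allP => /= h.
  by move=> i _; move: (h (Ys i)); rewrite imset_f.
by move=> A; apply/implyP => /imsetP [i _ ->]; apply: h; rewrite mem_enum.
Qed.

Local Notation V := {B : {set T} | rvert x k B}.
Local Notation Pt := (gV (cart_prod_seq (map F s0))).

Lemma rv p : rvert x k (dec s0 p).
Proof.
have tr : transversal_of Y0 (dec s0 p) by rewrite trans_iff decP //.
apply/andP; split; first by apply/existsP; exists Y0; rewrite HYpart HYx tr.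
by rewrite (card_trans HYpart tr) HYk.
Qed.

Definition phi (p : Pt) : V := exist _ (dec s0 p) (rv p).

Lemma phi_inj : injective phi.
Proof. by move=> p q /(congr1 val) /= /(dec_inj _ us0). Qed.

Lemma main_iff (E : rel V) (hEadj : forall B1 B2, E B1 B2 = adjR R (val B1) (val B2)) :
  graph_iso (@FGraph V E) (cart_prod_seq (map F s0)) <->
  (forall Y : {set {set T}}, is_vpartition Y -> x Y -> #|Y| = k -> Y = Y0).
Proof.
split.
- move=> [h [hbij _]] Y hYp hYx hYk.
  apply: uniq_from_trans => //; first by rewrite hYk.
  move=> B tB; apply/negPn/negP => ntB.
  have rB : rvert x k B.
    apply/andP; split; first by apply/existsP; exists Y; rewrite hYp hYx tB.
    by rewrite (card_trans hYp tB) hYk.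
  pose b : V := exist _ B rB.
  have c1 := bij_eq_card hbij.
  have c2 : #|[set: Pt]| = #|[set: V]| by rewrite !cardsT; apply: esym.
  have : #|[set phi p | p in [set: Pt]]| < #|[set: V]|.
    apply: proper_card; rewrite properT; apply/eqP => e.
    have : b \in [set phi p | p in [set: Pt]] by rewrite e inE.
    case/imsetP => p _ eb; move/negP: ntB; apply.
    have -> : B = val b by [].
    by rewrite eb /= trans_iff decP //.
  by rewrite card_imset ?c2 ?ltnn //; apply: phi_inj.
- move=> hU.
  have surj : forall b : V, exists p, phi p == b.
    move=> [B rB]; have rB' := rB; case/andP: rB' => /existsP [Y /and3P [hYp hYx tB]] /eqP cB.
    have eY : Y = Y0 by apply: hU => //; rewrite -(card_trans hYp tB) cB.
    subst Y; move: tB; rewrite trans_iff => /(dec_surj _ _ us0) [p hp].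
    by exists p; apply/eqP/val_inj; rewrite /= hp.
  pose psi (b : V) := xchoose (surj b).
  have phipsi : forall b, phi (psi b) = b by move=> b; apply/eqP; apply: (xchooseP (surj b)).
  have psiphi : forall p, psi (phi p) = p by move=> p; apply: phi_inj; rewrite phipsi.
  exists psi; split; first by exists phi.
  move=> u v /=; rewrite -{1}(phipsi u) -{1}(phipsi v) hEadj /=.
  by rewrite (dec_adj _ us0).
Qed.

End Dec.

End M4.
Import M4.


Lemma te_adjR (T : finType) (B1 B2 : {set T}) : te_adj B1 B2 = adjR (fun _ _ => true) B1 B2.
Proof.
rewrite /te_adj /adjR; apply: eq_existsb => v1; congr (_ && _); apply: eq_existsb => v2.
by rewrite andbT.
Qed.

Theorem theorem3p16 (T : finType) (e : rel T)
    (e_sym : symmetric e) (e_irr : irreflexive e)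
    (x : {set {set T}} -> bool) (ismax : bool) (k : nat)
    (Hk : param_value x ismax k)
    (m : nat) (Ys : 'I_m -> {set T}) (Ys_inj : injective Ys)
    (HYpart : is_vpartition [set Ys i | i : 'I_m])
    (HYx : x [set Ys i | i : 'I_m])
    (HYk : #|[set Ys i | i : 'I_m]| = k) :
  [<-> graph_iso (RTE x k) (cart_prod_seq [seq Kgraph #|Ys i| | i <- enum 'I_m]);
       graph_iso (RTS e x k) (cart_prod_seq [seq induced e (Ys i) | i <- enum 'I_m]);
       forall Y : {set {set T}}, is_vpartition Y -> x Y -> #|Y| = k ->
         Y = [set Ys i | i : 'I_m]].
Proof.
have disj : forall i j y, y \in Ys i -> y \in Ys j -> i = j.
  move=> i j y yi yj; apply: Ys_inj; apply/eqP; apply/negPn/negP => nij.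
  move/trivIsetP: (triv_of HYpart) => /(_ (Ys i) (Ys j)).
  rewrite !imset_f // => /(_ isT isT nij) dis.
  by rewrite (disjointFr dis yi) in yj.
have hEK : forall i (a b : 'I_#|Ys i|), (a != b) = (enum_val a != enum_val b) && true.
  by move=> i a b; rewrite andbT (inj_eq enum_val_inj).
have iffK := @main_iff T m Ys (fun i => Kgraph #|Ys i|)
  (fun i (a : 'I_#|Ys i|) => enum_val a) (fun _ _ => true)
  (fun i => @enum_val_inj _ _) (fun i a => enum_valP a)
  (fun i y yi => ex_intro _ (enum_rank_in yi y) (enum_rankK_in yi yi))
  disj
  hEK
  x k HYpart HYx HYk (fun B1 B2 => te_adj (val B1) (val B2)) (fun B1 B2 => te_adjR _ _ _).
have hEi : forall i (a b : {y | y \in Ys i}), e (val a) (val b) = (val a != val b) && e (val a) (val b).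
  by move=> i a b; case: (val a =P val b) => [->|] //=; rewrite e_irr.
have iffS := @main_iff T m Ys (fun i => induced e (Ys i))
  (fun i (a : {y | y \in Ys i}) => val a) e
  (fun i => val_inj) (fun i a => valP a)
  (fun i y yi => ex_intro _ (exist _ y yi) erefl)
  disj hEi
  x k HYpart HYx HYk (fun B1 B2 => ts_adj e (val B1) (val B2)) (fun B1 B2 => erefl).
tfae => [h1 | h2 | h3].
- exact: (proj2 iffS (proj1 iffK h1)).
- exact: (proj1 iffS h2).
- exact: (proj2 iffK h3).
Qed.
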